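(* Let $L$ be a linear order with a first element such that $L/\!\sim_\omega\;\cong 1$ and $\operatorname{cf}(L)=\omega_1$. Then $L$ is isomorphic to a suborder of $U$.
   Context: The countable condensation $\sim_\omega$ on a linear order $L$: $x\sim_\omega y$ iff the closed interval between $x$ and $y$ is countable; $L/\!\sim_\omega\;\cong 1$ means all elements of $L$ are mutually $\sim_\omega$-equivalent. $\operatorname{cf}(L)$ is the least length of a strictly increasing cofinal sequence in $L$. $U$ is the linear order $R^*+\mathbb{Q}+R$, where $R$ is obtained from $\omega_1$ by replacing each $\alpha<\omega_1$ with a point $u_\alpha$ followed by a copy of the rationals, $R^*$ is the reverse of $R$, and the middle summand is a copy of the rationals. *)

(* Defs.v *)
From HB Require Import structures.
From mathcomp Require Import all_boot all_order all_algebra.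
From mathcomp Require Import boolp classical_sets cardinality.
Set Implicit Arguments. Unset Strict Implicit. Unset Printing Implicit Defensive.
Import Order.TTheory GRing.Theory Num.Theory.
Local Open Scope classical_set_scope.
Local Open Scope order_scope.

(* (W, wlt) is (an isomorphic copy of) omega_1: a well-ordered strict total
   order which is uncountable and all of whose proper initial segments are
   countable. *)
Record is_omega1 (W : Type) (wlt : W -> W -> Prop) : Prop := {
  w1_irrefl : forall a, ~ wlt a a;
  w1_trans  : forall a b c, wlt a b -> wlt b c -> wlt a c;
  w1_total  : forall a b, wlt a b \/ a = b \/ wlt b a;
  w1_wf     : well_founded wlt;
  w1_uncountable : ~ countable [set: W];
  w1_segments_countable : forall g : W, countable [set b | wlt b g]
}.

Section LinOrd.
Context {d : Order.disp_t} {L : orderType d}.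

Definition has_first_element : Prop := exists m : L, forall x : L, m <= x.

Definition sim_omega (x y : L) : Prop :=
  countable [set z : L | (Order.min x y <= z) && (z <= Order.max x y)].

(* L / ~_omega is the one-point order: all elements mutually equivalent *)
Definition cond_omega_trivial : Prop := forall x y : L, sim_omega x y.

Definition incr_cofinal (I : Type) (ilt : I -> I -> Prop) (f : I -> L) : Prop :=
  (forall i j, ilt i j -> f i < f j) /\ (forall x : L, exists i, x <= f i).

(* cf(L) = omega_1, where (W, wlt) is omega_1: there is a strictly increasing
   cofinal sequence of length omega_1 and none of any countable ordinal length
   (the countable ordinals being exactly the proper initial segments of W). *)
Definition cf_is_omega1 (W : Type) (wlt : W -> W -> Prop) : Prop :=
  (exists f : W -> L, incr_cofinal wlt f) /\
  (forall g : W, ~ exists f : {b : W | wlt b g} -> L,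
       incr_cofinal (fun i j => wlt (proj1_sig i) (proj1_sig j)) f).

End LinOrd.

(* R: each alpha < omega_1 replaced by a point u_alpha (None) followed by a
   copy of the rationals (Some q).  Lexicographic order. *)
Definition R_lt (W : Type) (wlt : W -> W -> Prop)
  (p q : W * option rat) : Prop :=
  wlt p.1 q.1 \/
  (p.1 = q.1 /\ match p.2, q.2 with
                | None, Some _ => True
                | Some a, Some b => (a < b)%R
                | _, _ => False
                end).

Inductive Upt (W : Type) : Type :=
  | UL of W & option rat   (* element of R^* (reverse of R) *)
  | UM of rat              (* element of the middle copy of Q *)
  | UR of W & option rat.  (* element of R *)

Definition U_lt (W : Type) (wlt : W -> W -> Prop) (x y : Upt W) : Prop :=
  match x, y with
  | UL a p, UL b q => R_lt wlt (b, q) (a, p)   (* reversed *)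
  | UL _ _, _ => True
  | UM _, UL _ _ => False
  | UM a, UM b => (a < b)%R
  | UM _, UR _ _ => True
  | UR _ _, UL _ _ => False
  | UR _ _, UM _ => False
  | UR a p, UR b q => R_lt wlt (a, p) (b, q)
  end.

Definition embeds_into_U {d : Order.disp_t} (L : orderType d)
  (W : Type) (wlt : W -> W -> Prop) : Prop :=
  exists f : L -> Upt W, forall x y : L, (x < y)%O <-> U_lt wlt (f x) (f y).

(* Main.v *)
Require Import Defs.
From HB Require Import structures.
From mathcomp Require Import all_boot all_order all_algebra.
From mathcomp Require Import boolp classical_sets cardinality.
From mathcomp Require Import lra.
Set Implicit Arguments. Unset Strict Implicit. Unset Printing Implicit Defensive.
Import Order.TTheory GRing.Theory Num.Theory.

Module Aux.
Local Open Scope classical_set_scope.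
Local Open Scope ring_scope.

Lemma above_fam (n : nat) (a : nat -> rat) (Q : nat -> Prop) (x : rat) :
  (forall j, (j < n)%N -> Q j -> x < a j) ->
  exists q, x < q /\ forall j, (j < n)%N -> Q j -> q < a j.
Proof.
elim: n => [|n IH] H.
  by exists (x + 1); split; [lra|].
have [q0 [xq0 Hq0]] : exists q, x < q /\ forall j, (j < n)%N -> Q j -> q < a j.
  by apply: IH => j jn; apply: H; apply: ltnW.
case: (pselect (Q n)) => Qn; last first.
  exists q0; split=> // j; rewrite ltnS leq_eqVlt => /orP[/eqP->|jn] //.
  exact: Hq0.
have xa := H n (ltnSn n) Qn.
case: (ltrP q0 ((x + a n) / 2)) => hq.
  exists q0; split=> // j; rewrite ltnS leq_eqVlt => /orP[/eqP->|jn] Qj.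
    lra.
  exact: Hq0 j jn Qj.
exists ((x + a n) / 2); split; first lra.
move=> j; rewrite ltnS leq_eqVlt => /orP[/eqP->|jn] Qj; first lra.
have := Hq0 j jn Qj; lra.
Qed.

Lemma below_fam (n : nat) (a : nat -> rat) (P : nat -> Prop) (x : rat) :
  (forall j, (j < n)%N -> P j -> a j < x) ->
  exists q, q < x /\ forall j, (j < n)%N -> P j -> a j < q.
Proof.
move=> H.
have H' : forall j, (j < n)%N -> P j -> - x < - a j.
  by move=> j jn Pj; have := H j jn Pj; lra.
have [q [h1 h2]] := @above_fam n (fun j => - a j) P (- x) H'.
exists (- q); split; first lra.
move=> j jn Pj; have := h2 j jn Pj; lra.
Qed.

Lemma between_fam (n : nat) (a : nat -> rat) (P Q : nat -> Prop) :
  (forall i j, (i < n)%N -> (j < n)%N -> P i -> Q j -> a i < a j) ->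
  exists q, forall i, (i < n)%N -> (P i -> a i < q) /\ (Q i -> q < a i).
Proof.
elim: n => [|n IH] H; first by exists 0.
have [q0 Hq0] : exists q, forall i, (i < n)%N -> (P i -> a i < q) /\ (Q i -> q < a i).
  by apply: IH => i j ii jj; apply: H; apply: ltnW.
have Hn : forall i, (i < n)%N -> (P i -> a i < q0) /\ (Q i -> q0 < a i) := Hq0.
case: (pselect (P n)) => Pn.
  case: (ltrP (a n) q0) => hq.
    exists q0 => i; rewrite ltnS leq_eqVlt => /orP[/eqP->|ii].
      split=> // Qn; have := H n n (ltnSn n) (ltnSn n) Pn Qn; lra.
    exact: Hn.
  have [q [h1 h2]] := @above_fam n a Q (a n)
     (fun j jn Qj => H n j (ltnSn n) (ltnW jn) Pn Qj).
  exists q => i; rewrite ltnS leq_eqVlt => /orP[/eqP->|ii].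
    split=> // Qn; have := H n n (ltnSn n) (ltnSn n) Pn Qn; lra.
  split; last exact: h2.
  move=> Pi; have := (Hn i ii).1 Pi; lra.
case: (pselect (Q n)) => Qn.
  case: (ltrP q0 (a n)) => hq.
    exists q0 => i; rewrite ltnS leq_eqVlt => /orP[/eqP->|ii].
      by split.
    exact: Hn.
  have [q [h1 h2]] := @below_fam n a P (a n)
     (fun j jn Pj => H j n (ltnW jn) (ltnSn n) Pj Qn).
  exists q => i; rewrite ltnS leq_eqVlt => /orP[/eqP->|ii].
    by split.
  split; first exact: h2.
  move=> Qi; have := (Hn i ii).2 Qi; lra.
exists q0 => i; rewrite ltnS leq_eqVlt => /orP[/eqP->|ii]; first by split.
exact: Hn.
Qed.

Section Construct.
Variables (d : Order.disp_t) (T : orderType d) (e : nat -> T).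

Definition cons_ok (n : nat) (s : seq rat) (q : rat) : Prop :=
  forall i, (i < n)%N -> ((e i < e n)%O -> nth 0 s i < q) /\ ((e n < e i)%O -> q < nth 0 s i).

Definition step n s := xget (0 : rat) (cons_ok n s).

Fixpoint hs (n : nat) : seq rat :=
  match n with 0 => [::] | n'.+1 => rcons (hs n') (step n' (hs n')) end.

Definition hh n := step n (hs n).

Lemma size_hs n : size (hs n) = n.
Proof. by elim: n => //= n IH; rewrite size_rcons IH. Qed.

Lemma nth_hs n i : (i < n)%N -> nth 0 (hs n) i = hh i.
Proof.
elim: n => // n IH; rewrite ltnS leq_eqVlt => /orP[/eqP->|ii] /=.
  by rewrite nth_rcons size_hs ltnn eqxx.
by rewrite nth_rcons size_hs ii IH.
Qed.

Lemma hh_mono n : forall i j, (i < n)%N -> (j < n)%N -> (e i < e j)%O -> hh i < hh j.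
Proof.
elim: n => // n IH.
have ok : cons_ok n (hs n) (hh n).
  apply: xgetPex.
  have [q Hq] := @between_fam n hh (fun i => (e i < e n)%O) (fun i => (e n < e i)%O)
     (fun i j ii jj ei ej => IH i j ii jj (lt_trans ei ej)).
  by exists q => i ii; rewrite nth_hs //; apply: Hq.
have okn : forall i, (i < n)%N -> ((e i < e n)%O -> hh i < hh n) /\ ((e n < e i)%O -> hh n < hh i).
  by move=> i ii; have := ok i ii; rewrite (nth_hs ii).
move=> i j; rewrite ltnS leq_eqVlt => /orP[/eqP Ei|ii]; rewrite ltnS leq_eqVlt => /orP[/eqP Ej|jj] eij.
- by move: eij; rewrite Ei Ej ltxx.
- by rewrite Ei; apply: (okn j jj).2; rewrite -Ei.
- by rewrite Ej; apply: (okn i ii).1; rewrite -Ej.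
- by apply: IH.
Qed.
End Construct.


Lemma countable_embed_rat (d : Order.disp_t) (T : orderType d) (S : set T) :
  countable S -> exists g : T -> rat, forall x y, S x -> S y -> (x < y)%O -> g x < g y.
Proof.
move=> /countable_injP [f finj].
case: (pselect (exists x, S x)) => [[x0 Sx0]|nS]; last first.
  by exists (fun _ => 0) => x y Sx; exfalso; apply: nS; exists x.
pose e n := xget x0 [set x | S x /\ f x = n].
have ef : forall x, S x -> e (f x) = x.
  move=> x Sx; have [Sy fy] : [set y | S y /\ f y = f x] (e (f x)).
    by apply: (@xgetPex _ x0 [set y | S y /\ f y = f x]); exists x.
  by apply: (finj _ _ (mem_set Sy) (mem_set Sx)).
exists (fun x => hh e (f x)) => x y Sx Sy xy.
apply: (@hh_mono _ _ e (maxn (f x) (f y)).+1); rewrite ?ltnS ?leq_maxl ?leq_maxr //.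
by rewrite !ef.
Qed.

End Aux.

Theorem proposition3p13 (W : Type) (wlt : W -> W -> Prop)
  (hW : is_omega1 wlt)
  (d : Order.disp_t) (L : orderType d)
  (hfirst : @has_first_element d L)
  (hcond : @cond_omega_trivial d L)
  (hcf : @cf_is_omega1 d L W wlt) :
  embeds_into_U L wlt.
Proof.
have [irr tr tot wf _ _] := hW.
have [[f [finc fcof]] _] := hcf.
have [m hm] := hfirst.
have wmin : forall P : W -> Prop, (exists a, P a) ->
    exists a, P a /\ forall b, wlt b a -> ~ P b.
  move=> P [a Pa]; apply: contrapT => nomin.
  suff H : forall a, ~ P a by case: (H a Pa).
  move=> a0; elim/(well_founded_ind wf): a0 => c IH Pc.
  by apply: nomin; exists c; split => // b ba Pb; exact: IH b ba Pb.
have blkex : forall x : L, exists a, (x <= f a)%O /\ forall b, wlt b a -> ~ (x <= f b)%O.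
  by move=> x; apply: wmin; apply: fcof.
pose blk x := proj1_sig (cid (blkex x)).
have blkP : forall x, (x <= f (blk x))%O /\ forall b, wlt b (blk x) -> ~ (x <= f b)%O.
  by move=> x; exact: (proj2_sig (cid (blkex x))).
have blk_mono : forall x y, (x < y)%O -> blk x = blk y \/ wlt (blk x) (blk y).
  move=> x y xy; case: (tot (blk x) (blk y)) => [h|[h|h]]; [right|left|exfalso] => //.
  have [hy _] := blkP y; have [_ hx] := blkP x.
  by apply: (hx _ h); exact: le_trans (ltW xy) hy.
have cnt : forall a, countable [set x | blk x = a]%classic.
  move=> a; apply: sub_countable (hcond m (f a)); apply: subset_card_le.
  move=> x /= bx; rewrite (min_l (hm (f a))) (max_r (hm (f a))) hm /=.
  by have [h _] := blkP x; rewrite -bx.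
have Gex : forall a, exists g : L -> rat, forall x y, blk x = a -> blk y = a ->
    (x < y)%O -> (g x < g y)%R.
  by move=> a; apply: Aux.countable_embed_rat (cnt a).
pose G a := proj1_sig (cid (Gex a)).
have GP : forall a x y, blk x = a -> blk y = a -> (x < y)%O -> (G a x < G a y)%R.
  by move=> a; exact: (proj2_sig (cid (Gex a))).
exists (fun x => UR (blk x) (Some (G (blk x) x))) => x y /=; split.
  move=> xy; rewrite /R_lt /=; case: (blk_mono x y xy) => [e|h]; [right|left] => //.
  by split=> //; rewrite -e; apply: GP.
rewrite /R_lt /=; case=> [h|[e h]].
  case: (ltgtP x y) => // [yx|exy].
    case: (blk_mono y x yx) => [e|h']; first by rewrite e in h; case: (irr _ h).
    by case: (irr _ (tr _ _ _ h h')).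
  by rewrite exy in h; case: (irr _ h).
case: (ltgtP x y) => // [yx|exy].
  have := GP (blk x) y x (esym e) erefl yx.
  by rewrite -e in h; rewrite lt_gtF.
by rewrite exy ltxx in h.
Qed.
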